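(* Fix $b>0$. There exists $C=C(b)>0$ such that for all $x,y\in\mathbb Z_{\ge0}$ and all integers $N\ge n\ge1$, $$\mathfrak p^N_n(x,y)\le\frac{C}{\sqrt{n+1}}\,e^{-b|x-y|/\sqrt n}.$$
   Context: Let $p_n(z)$ be the probability that simple symmetric random walk on $\mathbb Z$ started at $0$ is at $z$ at time $n$. For $x,y\in\mathbb Z_{\ge0}$ set $p^{(1/2)}_n(x,y)=p_n(x-y)-p_n(x+y+2)$, $\psi(x;n)=\sum_{y\ge0}p^{(1/2)}_n(x,y)$, and for $0\le n\le N$, $\mathfrak p^N_n(x,y)=p^{(1/2)}_n(x,y)\,\psi(y;N-n)/\psi(x;N)$. *)

(* Defs.v *)
From Stdlib Require Import Reals ZArith Lra Lia.
Open Scope R_scope.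

(* p_n(z): probability that simple symmetric random walk on Z started at 0
   is at z at time n (defined by the one-step recursion of the walk). *)
Fixpoint srw_p (n : nat) : Z -> R :=
  match n with
  | O => fun z => if Z.eqb z 0 then 1 else 0
  | S m => fun z => (srw_p m (z - 1)%Z + srw_p m (z + 1)%Z) / 2
  end.

Definition p_half (n x y : nat) : R :=
  srw_p n (Z.of_nat x - Z.of_nat y)%Z - srw_p n (Z.of_nat x + Z.of_nat y + 2)%Z.

(* psi(x;n) = sum_{y>=0} p^(1/2)_n(x,y).  All terms with y > x + n vanish
   (both |x-y| > n and x+y+2 > n), so the series is the finite sum over
   y = 0 .. x+n (sum_f_R0 f k = f 0 + ... + f k). *)
Definition psi (x n : nat) : R :=
  sum_f_R0 (fun y => p_half n x y) (x + n).

Definition frak_p (N n x y : nat) : R :=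
  p_half n x y * psi y (N - n) / psi x N.

(* Main.v *)
Require Import Defs.
From Stdlib Require Import Reals ZArith Lra Lia Psatz.
Open Scope R_scope.

Notation p := srw_p.

Fixpoint sm (f : nat -> R) (k : nat) : R :=
  match k with O => 0 | S k => sm f k + f k end.

Lemma sm_ext f g k : (forall i, (i < k)%nat -> f i = g i) -> sm f k = sm g k.
Proof. induction k; intros H; simpl; auto. rewrite IHk by (intros; apply H; lia). rewrite H by lia. auto. Qed.

Lemma sm_half f g k : sm (fun i => (f i + g i)/2) k = (sm f k + sm g k)/2.
Proof. induction k; simpl; [lra|]. rewrite IHk. lra. Qed.

Lemma sm_app f a b : sm f (a + b) = sm f a + sm (fun i => f (a + i)%nat) b.
Proof. induction b; simpl. rewrite Nat.add_0_r; lra. rewrite Nat.add_succ_r. simpl. rewrite IHb. lra. Qed.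

Lemma sm_nonneg f k : (forall i, 0 <= f i) -> 0 <= sm f k.
Proof. intros H; induction k; simpl; [lra|]. specialize (H k). lra. Qed.

Lemma sm_le_const f k c : (forall i, (i < k)%nat -> f i <= c) -> sm f k <= INR k * c.
Proof. induction k; intros H; cbn [sm]; [simpl; lra|]. rewrite S_INR. specialize (IHk ltac:(intros; apply H; lia)). specialize (H k ltac:(lia)). lra. Qed.

Lemma sm_shift h w : sm h (S w) = h O + sm (fun i => h (S i)) w.
Proof. induction w. simpl. lra. change (sm h (S (S w))) with (sm h (S w) + h (S w)). rewrite IHw. simpl. lra. Qed.

Lemma sum_f_R0_sm f L : sum_f_R0 f L = sm f (S L).
Proof. induction L; simpl. lra. rewrite IHL. simpl. lra. Qed.

Lemma sm_tele g w L :
  sm (fun i => g i - g (i + w)%nat) L = sm g w - sm (fun i => g (L + i)%nat) w.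
Proof.
  induction L.
  - cbn [sm]. change (sm (fun i => g (0 + i)%nat) w) with (sm g w). lra.
  - simpl. rewrite IHL.
    assert (H1 : sm (fun i => g (L + i)%nat) (S w) = sm (fun i => g (L + i)%nat) w + g (L + w)%nat) by reflexivity.
    rewrite sm_shift in H1.
    rewrite (sm_ext (fun i => g (L + S i)%nat) (fun i => g (S (L + i))%nat)) in H1 by (intros; f_equal; lia).
    rewrite Nat.add_0_r in H1. lra.
Qed.

Lemma p_nonneg n u : 0 <= p n u.
Proof. revert u; induction n; intros u; simpl. destruct (Z.eqb u 0); lra. pose proof (IHn (u-1)%Z). pose proof (IHn (u+1)%Z). lra. Qed.

Lemma p_S n u : p (S n) u = (p n (u - 1)%Z + p n (u + 1)%Z) / 2.
Proof. reflexivity. Qed.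

Lemma p_sym n u : p n (- u)%Z = p n u.
Proof.
  revert u; induction n; intros u.
  - simpl. destruct (Z.eqb_spec (-u) 0); destruct (Z.eqb_spec u 0); try lra; lia.
  - rewrite !p_S. replace (- u - 1)%Z with (- (u + 1))%Z by lia.
    replace (- u + 1)%Z with (- (u - 1))%Z by lia. rewrite !IHn. lra.
Qed.

Lemma p_supp n u : (Z.of_nat n < Z.abs u)%Z -> p n u = 0.
Proof.
  revert u; induction n; intros u H.
  - simpl. destruct (Z.eqb_spec u 0); [lia|lra].
  - rewrite p_S. rewrite !IHn by lia. lra.
Qed.

Lemma p_id n u : (INR n + IZR u + 2) * p n (u + 2)%Z = (INR n - IZR u) * p n u.
Proof.
  revert u; induction n; intros u.
  - simpl. destruct (Z.eqb_spec (u+2) 0); destruct (Z.eqb_spec u 0).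
    + lia.
    + replace u with (-2)%Z by lia. simpl. lra.
    + subst. simpl. lra.
    + lra.
  - rewrite !p_S. rewrite S_INR.
    pose proof (IHn (u+1)%Z) as H1. pose proof (IHn (u-1)%Z) as H2.
    replace (u + 1 + 2)%Z with (u + 2 + 1)%Z in H1 by lia.
    replace (u - 1 + 2)%Z with (u + 1)%Z in H2 by lia.
    replace (u + 2 - 1)%Z with (u + 1)%Z by lia.
    rewrite plus_IZR in H1. rewrite minus_IZR in H2. lra.
Qed.

Lemma p_mono n u : (-1 <= u)%Z -> p n (u + 2)%Z <= p n u.
Proof.
  intros Hu. pose proof (p_id n u). pose proof (p_nonneg n u). pose proof (p_nonneg n (u+2)).
  apply IZR_le in Hu. pose proof (pos_INR n).
  nra.
Qed.

Lemma p_mono_k n d k : (0 <= d)%Z -> p n (d + 2 * Z.of_nat k)%Z <= p n d.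
Proof.
  intros Hd. induction k. replace (d + 2 * Z.of_nat 0)%Z with d by lia. lra.
  replace (d + 2 * Z.of_nat (S k))%Z with (d + 2 * Z.of_nat k + 2)%Z by lia.
  pose proof (p_mono n (d + 2 * Z.of_nat k)%Z ltac:(lia)). lra.
Qed.

Lemma p_le_q_nat n k : p n (Z.of_nat k) <= p n 0 + p n 1.
Proof.
  pose proof (p_nonneg n 0). pose proof (p_nonneg n 1).
  induction k as [k IH] using lt_wf_ind.
  destruct k as [|[|k]]. simpl. lra. simpl. lra.
  replace (Z.of_nat (S (S k))) with (Z.of_nat k + 2)%Z by lia.
  pose proof (p_mono n (Z.of_nat k) ltac:(lia)). specialize (IH k ltac:(lia)). lra.
Qed.

Lemma p_le_q n u : p n u <= p n 0 + p n 1.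
Proof.
  destruct (Z_le_gt_dec 0 u).
  - replace u with (Z.of_nat (Z.to_nat u)) by lia. apply p_le_q_nat.
  - replace u with (- Z.of_nat (Z.to_nat (-u)))%Z by lia. rewrite p_sym. apply p_le_q_nat.
Qed.

Lemma p_SS0 n : (INR n + 2) * p (S (S n)) 0 = (INR n + 1) * p n 0.
Proof.
  rewrite p_S. replace (0 - 1)%Z with (- (1))%Z by lia. rewrite p_sym.
  replace (0+1)%Z with 1%Z by lia. rewrite p_S.
  replace (1 - 1)%Z with 0%Z by lia. replace (1+1)%Z with (0+2)%Z by lia.
  pose proof (p_id n 0). simpl IZR in H. lra.
Qed.

Lemma p_S0 n : p (S n) 0 = p n 1.
Proof. rewrite p_S. replace (0 - 1)%Z with (- (1))%Z by lia. rewrite p_sym.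
  replace (0+1)%Z with 1%Z by lia. lra. Qed.

Lemma p_SS1 n : (INR n + 3) * p (S (S n)) 1 = (INR n + 2) * p n 1.
Proof.
  rewrite p_S. replace (1 - 1)%Z with 0%Z by lia. replace (1+1)%Z with (0+2)%Z by lia.
  pose proof (p_id (S n) 0) as H. rewrite S_INR in H. simpl IZR in H.
  rewrite p_S0 in *. lra.
Qed.

Definition q n := p n 0 + p n 1.

Lemma q_nonneg n : 0 <= q n.
Proof. unfold q. pose proof (p_nonneg n 0). pose proof (p_nonneg n 1). lra. Qed.

Lemma q_bounds n : q n ^ 2 * (INR n + 2) <= 2 /\ 3 <= q n ^ 2 * (4 * (2 * INR n + 1)).
Proof.
  enough (H : forall n, (q n ^ 2 * (INR n + 2) <= 2 /\ 3 <= q n ^ 2 * (4 * (2 * INR n + 1))) /\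
                  (q (S n) ^ 2 * (INR (S n) + 2) <= 2 /\ 3 <= q (S n) ^ 2 * (4 * (2 * INR (S n) + 1)))) by apply H.
  clear n. induction n.
  - unfold q. simpl. split; lra.
  - split; [apply IHn|]. destruct IHn as [[H1 H2] _].
    pose proof (p_SS0 n) as E0. pose proof (p_SS1 n) as E1.
    pose proof (p_nonneg n 0) as N0. pose proof (p_nonneg n 1) as N1.
    pose proof (pos_INR n) as Hn. unfold q in *. rewrite !S_INR.
    set (a := p n 0) in *. set (c := p n 1) in *.
    set (a' := p (S (S n)) 0) in *. set (c' := p (S (S n)) 1) in *.
    assert (Ea : a' = a * (INR n + 1) / (INR n + 2)) by (apply (Rmult_eq_reg_l (INR n + 2)); [field_simplify; lra | lra]).
    assert (Ec : c' = c * (INR n + 2) / (INR n + 3)) by (apply (Rmult_eq_reg_l (INR n + 3)); [field_simplify; lra | lra]).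
    assert (U : a' + c' <= (a + c) * (INR n + 2) / (INR n + 3)).
    { rewrite Ea, Ec. apply (Rmult_le_reg_l ((INR n + 2) * (INR n + 3))). nra.
      field_simplify; [|lra|lra]. nra. }
    assert (L : (a + c) * (INR n + 1) / (INR n + 2) <= a' + c').
    { rewrite Ea, Ec. apply (Rmult_le_reg_l ((INR n + 2) * (INR n + 3))). nra.
      field_simplify; [|lra|lra]. nra. }
    assert (P0 : 0 <= (a + c) * (INR n + 1) / (INR n + 2)).
    { apply Rmult_le_pos; [|apply Rlt_le, Rinv_0_lt_compat; lra]. nra. }
    split.
    + assert (S1 : (a'+c')^2 <= ((a + c) * (INR n + 2) / (INR n + 3))^2) by (apply pow_incr; lra).
      assert (S2 : ((a + c) * (INR n + 2) / (INR n + 3))^2 * (INR n + 1 + 1 + 2) <= 2).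
      { replace (((a + c) * (INR n + 2) / (INR n + 3))^2 * (INR n + 1 + 1 + 2)) with
            ((a+c)^2 * (INR n + 2) * ((INR n + 2) * (INR n + 4) / (INR n + 3)^2)) by (field; lra).
        assert (0 <= (INR n + 2) * (INR n + 4) / (INR n + 3)^2 <= 1).
        { split. apply Rmult_le_pos; [nra|]. apply Rlt_le, Rinv_0_lt_compat; nra.
          apply (Rmult_le_reg_l ((INR n + 3)^2)). nra. field_simplify; nra. }
        assert (0 <= (a+c)^2 * (INR n + 2)) by nra. nra. }
      nra.
    + assert (S1 : ((a + c) * (INR n + 1) / (INR n + 2))^2 <= (a'+c')^2) by (apply pow_incr; lra).
      assert (S2 : 3 <= ((a + c) * (INR n + 1) / (INR n + 2))^2 * (4 * (2 * (INR n + 1 + 1) + 1))).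
      { replace (((a + c) * (INR n + 1) / (INR n + 2))^2 * (4 * (2 * (INR n + 1 + 1) + 1))) with
            ((a+c)^2 * (4 * (2 * INR n + 1)) * ((INR n + 1)^2 * (2 * INR n + 5) / ((INR n + 2)^2 * (2 * INR n + 1)))) by (field; lra).
        assert (1 <= (INR n + 1)^2 * (2 * INR n + 5) / ((INR n + 2)^2 * (2 * INR n + 1))).
        { apply (Rmult_le_reg_l ((INR n + 2)^2 * (2 * INR n + 1))). nra. field_simplify; nra. }
        nra. }
      nra.
Qed.

Lemma p_step_exp n (u : nat) :
  p n (Z.of_nat u + 2)%Z <= p n (Z.of_nat u) * exp (- (INR u + 1) / (INR n + 1)).
Proof.
  pose proof (p_id n (Z.of_nat u)) as H. rewrite <- INR_IZR_INZ in H.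
  pose proof (p_nonneg n (Z.of_nat u)). pose proof (p_nonneg n (Z.of_nat u + 2)).
  pose proof (pos_INR n). pose proof (pos_INR u).
  pose proof (exp_ineq1_le (- (INR u + 1) / (INR n + 1))) as E.
  assert (Hd : - (INR u + 1) / (INR n + 1) = - (INR u + 1) * / (INR n + 1)) by (unfold Rdiv; ring).
  destruct (Rle_dec (INR u) (INR n)).
  - assert (1 + - (INR u + 1) / (INR n + 1) = (INR n - INR u) / (INR n + 1)) by (field; lra).
    assert (p n (Z.of_nat u + 2) <= p n (Z.of_nat u) * ((INR n - INR u) / (INR n + 1))).
    { apply (Rmult_le_reg_l (INR n + 1)). lra. field_simplify; [|lra]. nra. }
    nra.
  - assert (p n (Z.of_nat u + 2) = 0) by nra. rewrite H4.
    apply Rmult_le_pos; [lra| apply Rlt_le, exp_pos].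
Qed.

Lemma p_gauss_aux n (u : nat) :
  p n (Z.of_nat u) * exp (INR u ^ 2 / (4 * (INR n + 1))) <= q n * exp (1 / (4 * (INR n + 1))).
Proof.
  pose proof (pos_INR n).
  induction u as [u IH] using lt_wf_ind.
  destruct u as [|[|u]].
  - unfold q. pose proof (p_nonneg n 1). replace (INR 0 ^ 2 / (4 * (INR n + 1))) with 0 by (simpl; field; lra).
    rewrite exp_0. change (Z.of_nat 0) with 0%Z. pose proof (exp_ineq1_le (1 / (4 * (INR n + 1)))).
    assert (0 <= 1 / (4 * (INR n + 1))) by (apply Rlt_le, Rdiv_lt_0_compat; lra).
    pose proof (p_nonneg n 0). nra.
  - replace (INR 1 ^ 2 / (4 * (INR n + 1))) with (1 / (4 * (INR n + 1))) by (simpl; field; lra).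
    change (Z.of_nat 1) with 1%Z.
    unfold q. pose proof (p_nonneg n 0). pose proof (exp_pos (1 / (4 * (INR n + 1)))). nra.
  - specialize (IH u ltac:(lia)).
    replace (Z.of_nat (S (S u))) with (Z.of_nat u + 2)%Z by lia.
    pose proof (p_step_exp n u).
    replace (INR (S (S u)) ^ 2 / (4 * (INR n + 1))) with (INR u ^ 2 / (4 * (INR n + 1)) + (INR u + 1) / (INR n + 1))
      by (rewrite !S_INR; field; lra).
    rewrite exp_plus.
    assert (Hx : exp (- (INR u + 1) / (INR n + 1)) * exp ((INR u + 1) / (INR n + 1)) = 1).
    { rewrite <- exp_plus. replace (- (INR u + 1) / (INR n + 1) + (INR u + 1) / (INR n + 1)) with 0 by (field; lra). apply exp_0. }
    pose proof (exp_pos (INR u ^ 2 / (4 * (INR n + 1)))). pose proof (exp_pos ((INR u + 1) / (INR n + 1))).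
    pose proof (p_nonneg n (Z.of_nat u + 2)).
    apply Rle_trans with (p n (Z.of_nat u) * exp (- (INR u + 1) / (INR n + 1)) * (exp (INR u ^ 2 / (4 * (INR n + 1))) * exp ((INR u + 1) / (INR n + 1)))).
    + apply Rmult_le_compat_r; [nra|lra].
    + replace (p n (Z.of_nat u) * exp (- (INR u + 1) / (INR n + 1)) * (exp (INR u ^ 2 / (4 * (INR n + 1))) * exp ((INR u + 1) / (INR n + 1))))
        with (p n (Z.of_nat u) * exp (INR u ^ 2 / (4 * (INR n + 1))) * (exp (- (INR u + 1) / (INR n + 1)) * exp ((INR u + 1) / (INR n + 1)))) by ring.
      rewrite Hx. lra.
Qed.

Lemma p_diff_step n (u : Z) : (0 <= u)%Z -> INR n * (p n u - p n (u+2)%Z) <= (2 * IZR u + 2) * p n u.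
Proof.
  intros Hu. pose proof (p_id n u). pose proof (p_mono n u ltac:(lia)).
  pose proof (p_nonneg n u). apply IZR_le in Hu. nra.
Qed.

Lemma p_diff n (d k : nat) :
  INR n * (p n (Z.of_nat d) - p n (Z.of_nat d + 2 * Z.of_nat k)%Z)
    <= 2 * INR k * (INR d + 2 * INR k - 1) * p n (Z.of_nat d).
Proof.
  pose proof (pos_INR n). pose proof (pos_INR d). pose proof (p_nonneg n (Z.of_nat d)).
  induction k.
  - replace (Z.of_nat d + 2 * Z.of_nat 0)%Z with (Z.of_nat d) by lia. simpl. lra.
  - replace (Z.of_nat d + 2 * Z.of_nat (S k))%Z with (Z.of_nat d + 2 * Z.of_nat k + 2)%Z by lia.
    pose proof (p_diff_step n (Z.of_nat d + 2 * Z.of_nat k)%Z ltac:(lia)) as Hs.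
    rewrite plus_IZR, mult_IZR, <- !INR_IZR_INZ in Hs.
    pose proof (p_mono_k n (Z.of_nat d) k ltac:(lia)).
    pose proof (pos_INR k). rewrite S_INR.
    assert ((2 * (INR d + 2 * INR k) + 2) * p n (Z.of_nat d + 2 * Z.of_nat k)%Z
            <= (2 * (INR d + 2 * INR k) + 2) * p n (Z.of_nat d)) by (apply Rmult_le_compat_l; lra).
    simpl IZR in Hs. nra.
Qed.

Definition W N x := sm (fun i => p N (Z.of_nat i - Z.of_nat x)%Z) (2 * x + 2).

Lemma psi_eq x N : psi x N = W N x.
Proof.
  unfold psi, W. rewrite sum_f_R0_sm.
  set (g := fun i => p N (Z.of_nat i - Z.of_nat x)%Z).
  rewrite (sm_ext _ (fun i => g i - g (i + (2 * x + 2))%nat)).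
  2:{ intros i _. unfold p_half, g. rewrite <- (p_sym N (Z.of_nat i - Z.of_nat x)).
      f_equal; f_equal; lia. }
  rewrite sm_tele.
  rewrite (sm_ext (fun i => g (S (x + N) + i)%nat) (fun _ => 0)).
  2:{ intros i _. unfold g. apply p_supp. lia. }
  assert (sm (fun _ => 0) (2 * x + 2) = 0).
  { generalize (2 * x + 2)%nat. induction n; simpl; lra. }
  lra.
Qed.

Lemma mass0 a k : sm (fun i => p 0 (a + Z.of_nat i)%Z) k <= 1 /\
   ((a + Z.of_nat k <= 0)%Z -> sm (fun i => p 0 (a + Z.of_nat i)%Z) k = 0).
Proof.
  induction k.
  - simpl. split; [lra|auto].
  - destruct IHk as [H1 H2]. cbn [sm]. change (p 0 (a + Z.of_nat k)%Z) with (if Z.eqb (a + Z.of_nat k) 0 then 1 else 0).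
    destruct (Z.eqb_spec (a + Z.of_nat k) 0).
    + rewrite H2 by lia. split; [lra|]. intros; lia.
    + split; [lra|]. intros. rewrite H2 by lia. lra.
Qed.

Lemma mass m a k : sm (fun i => p m (a + Z.of_nat i)%Z) k <= 1.
Proof.
  revert a; induction m; intros a.
  - apply mass0.
  - rewrite (sm_ext _ (fun i => (p m ((a - 1) + Z.of_nat i)%Z + p m ((a + 1) + Z.of_nat i)%Z) / 2)).
    2:{ intros i _. rewrite p_S. f_equal; f_equal; f_equal; lia. }
    rewrite sm_half. pose proof (IHm (a-1)%Z). pose proof (IHm (a+1)%Z). lra.
Qed.

Lemma W_nonneg N x : 0 <= W N x.
Proof. apply sm_nonneg. intros; apply p_nonneg. Qed.

Lemma W_le1 N x : W N x <= 1.
Proof.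
  unfold W. rewrite (sm_ext _ (fun i => p N (- Z.of_nat x + Z.of_nat i)%Z)) by (intros; f_equal; lia).
  apply mass.
Qed.

Lemma W_le_q N x : W N x <= (2 * INR x + 2) * q N.
Proof.
  unfold W. replace (2 * INR x + 2) with (INR (2 * x + 2)) by (rewrite plus_INR, mult_INR; simpl; lra).
  apply sm_le_const. intros. apply p_le_q.
Qed.

Lemma sm_ge_const f k c : (forall i, (i < k)%nat -> c <= f i) -> INR k * c <= sm f k.
Proof. induction k; intros H; cbn [sm]; [simpl; lra|]. rewrite S_INR. specialize (IHk ltac:(intros; apply H; lia)). specialize (H k ltac:(lia)). lra. Qed.

Lemma p_step_low n (u : nat) : (INR n - 2 * INR u) * p n (Z.of_nat u) <= (INR n + 2) * p n (Z.of_nat u + 2)%Z.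
Proof.
  pose proof (p_id n (Z.of_nat u)) as H. rewrite <- INR_IZR_INZ in H.
  pose proof (p_nonneg n (Z.of_nat u)). pose proof (p_nonneg n (Z.of_nat u + 2)).
  pose proof (pos_INR n). pose proof (pos_INR u).
  destruct (Rle_dec (INR u) (INR n)).
  - assert (Hp : p n (Z.of_nat u + 2) = (INR n - INR u) * p n (Z.of_nat u) / (INR n + INR u + 2)).
    { apply (Rmult_eq_reg_l (INR n + INR u + 2)); [|lra]. field_simplify; lra. }
    rewrite Hp. apply (Rmult_le_reg_l (INR n + INR u + 2)). lra. field_simplify; [|lra]. nra.
  - nra.
Qed.

Definition e n u := p n (Z.of_nat u) + p n (Z.of_nat u + 1)%Z.

Lemma e_step n u : (INR n - 2 * INR u - 2) * e n u <= (INR n + 2) * e n (u + 2).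
Proof.
  unfold e. pose proof (p_step_low n u). pose proof (p_step_low n (S u)).
  rewrite S_INR in H0. replace (Z.of_nat (S u)) with (Z.of_nat u + 1)%Z in H0 by lia.
  replace (Z.of_nat (u + 2)) with (Z.of_nat u + 2)%Z by lia.
  replace (Z.of_nat u + 2 + 1)%Z with (Z.of_nat u + 1 + 2)%Z by lia.
  pose proof (p_nonneg n (Z.of_nat u)). lra.
Qed.

Lemma e_nonneg n u : 0 <= e n u.
Proof. unfold e. pose proof (p_nonneg n (Z.of_nat u)). pose proof (p_nonneg n (Z.of_nat u + 1)). lra. Qed.

Lemma e_low n j : (INR n + 2 - 2 * INR j * (INR j + 1)) * q n <= (INR n + 2) * e n (2 * j).
Proof.
  pose proof (pos_INR n). pose proof (q_nonneg n).
  induction j.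
  - simpl. unfold e, q. simpl. lra.
  - replace (2 * S j)%nat with (2 * j + 2)%nat by lia. rewrite S_INR.
    pose proof (e_step n (2 * j)) as H1. rewrite mult_INR in H1. simpl (INR 2) in H1.
    pose proof (e_nonneg n (2 * j + 2)). pose proof (e_nonneg n (2 * j)). pose proof (pos_INR j).
    destruct (Rle_dec (INR n + 2 - 2 * (INR j + 1) * (INR j + 1 + 1)) 0).
    + nra.
    + assert (A : 0 < INR n - 2 * (2 * INR j) - 2) by nra.
      assert (B : (INR n - 2 * (2 * INR j) - 2) * ((INR n + 2 - 2 * INR j * (INR j + 1)) * q n) <=
                  (INR n - 2 * (2 * INR j) - 2) * ((INR n + 2) * e n (2 * j))) by (apply Rmult_le_compat_l; lra).
      apply (Rmult_le_reg_l (INR n + 2)). lra.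
      assert (C1 : (INR n + 2) * ((INR n - 2 * (2 * INR j) - 2) * e n (2 * j)) <= (INR n + 2) * ((INR n + 2) * e n (2 * j + 2)))
        by (apply Rmult_le_compat_l; lra).
      assert (C2 : (INR n + 2) * ((INR n + 2 - 2 * (INR j + 1) * (INR j + 1 + 1)) * q n) <=
                   (INR n - 2 * (2 * INR j) - 2) * ((INR n + 2 - 2 * INR j * (INR j + 1)) * q n)).
      { assert (0 <= 2 * INR j * (INR j + 1) * (4 * INR j + 4) * q n).
        { apply Rmult_le_pos; [|lra]. apply Rmult_le_pos; [|lra]. nra. }
        nra. }
      nra.
Qed.

Lemma sm_pairs N J : sm (fun i => p N (Z.of_nat i)) (2 * J + 2) = sm (fun j => e N (2 * j)) (J + 1).
Proof.
  induction J.
  - simpl (2 * 0 + 2)%nat. simpl (0 + 1)%nat. cbn [sm]. unfold e. replace (Z.of_nat (2 * 0) + 1)%Z with (Z.of_nat 1) by lia. replace (Z.of_nat (2 * 0)) with (Z.of_nat 0) by lia. lra.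
  - replace (2 * S J + 2)%nat with (S (S (2 * J + 2))) by lia. replace (S J + 1)%nat with (S (J + 1)) by lia.
    cbn [sm]. rewrite IHJ. unfold e. replace (Z.of_nat (2 * J + 2) + 1)%Z with (Z.of_nat (S (2 * J + 2))) by lia.
    replace (2 * (J + 1))%nat with (2 * J + 2)%nat by lia. replace (p N (Z.of_nat (S (2 * J + 2)))) with (p N (Z.of_nat (2 * J + 2) + 1)%Z) by (f_equal; lia). lra.
Qed.

Lemma W_low_J N x J : (2 * J <= x)%nat -> (4 * J * (J + 1) <= N + 2)%nat ->
  (INR J + 1) * q N / 2 <= W N x.
Proof.
  intros H1 H2. unfold W.
  replace (2 * x + 2)%nat with (x + (x + 2))%nat by lia. rewrite sm_app.
  assert (0 <= sm (fun i => p N (Z.of_nat i - Z.of_nat x)%Z) x) by (apply sm_nonneg; intros; apply p_nonneg).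
  assert (Ee : sm (fun i => p N (Z.of_nat (x + i) - Z.of_nat x)%Z) (x + 2) = sm (fun i => p N (Z.of_nat i)) (x + 2))
    by (apply sm_ext; intros; f_equal; lia).
  cbv beta. rewrite Ee.
  replace (x + 2)%nat with ((2 * J + 2) + (x - 2 * J))%nat by lia. rewrite sm_app.
  assert (0 <= sm (fun i => p N (Z.of_nat (2 * J + 2 + i))) (x - 2 * J)) by (apply sm_nonneg; intros; apply p_nonneg).
  rewrite sm_pairs.
  assert (INR (J + 1) * (q N / 2) <= sm (fun j => e N (2 * j)) (J + 1)).
  { apply sm_ge_const. intros j Hj.
    pose proof (e_low N j). pose proof (pos_INR N). pose proof (q_nonneg N).
    assert (4 * INR j * (INR j + 1) <= INR N + 2).
    { assert (4 * j * (j + 1) <= N + 2)%nat by nia. apply le_INR in H6. rewrite !mult_INR, !plus_INR in H6. simpl in H6. lra. }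
    apply (Rmult_le_reg_l (INR N + 2)). lra. nra. }
  rewrite plus_INR in H3. simpl (INR 1) in H3. lra.
Qed.

Lemma q_low N : 1 <= q N * (2 * sqrt (INR N + 1)).
Proof.
  pose proof (q_bounds N) as [_ H]. pose proof (q_nonneg N). pose proof (pos_INR N).
  set (v := sqrt (INR N + 1)).
  assert (Hv : v * v = INR N + 1) by (apply sqrt_sqrt; lra).
  assert (0 <= v) by apply sqrt_pos.
  assert (1 <= (q N * (2 * v)) ^ 2) by nra.
  assert (0 <= q N * (2 * v)) by nra. nra.
Qed.

Lemma psi_low x N : INR x + 1 <= 12 * (INR x + 1 + sqrt (INR N + 1)) * psi x N.
Proof.
  rewrite psi_eq.
  pose proof (pos_INR N) as HN. pose proof (pos_INR x) as Hx.
  set (v := sqrt (INR N + 1)).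
  assert (Hv : v * v = INR N + 1) by (apply sqrt_sqrt; lra).
  assert (Hv0 : 0 < v) by (apply sqrt_lt_R0; lra).
  pose proof (q_low N) as Hq. fold v in Hq. pose proof (q_nonneg N).
  set (s0 := Nat.sqrt (N + 2)).
  pose proof (Nat.sqrt_spec (N + 2) ltac:(lia)) as [S1 S2]. fold s0 in S1, S2.
  set (J0 := (s0 / 3)%nat).
  pose proof (Nat.div_mod s0 3 ltac:(lia)) as D1. pose proof (Nat.mod_upper_bound s0 3 ltac:(lia)) as D2.
  fold J0 in D1.
  assert (HJ0 : (4 * J0 * (J0 + 1) <= N + 2)%nat).
  { assert (3 * J0 * (3 * J0) <= s0 * s0)%nat by (apply Nat.mul_le_mono; lia).
    assert (4 * J0 <= 5 * (J0 * J0))%nat by (destruct J0; nia). nia. }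
  assert (HJ0' : (s0 + 1 <= 3 * (J0 + 1))%nat) by lia.
  assert (Hv3 : v <= 3 * (INR J0 + 1)).
  { assert (R1 : (INR N + 1) < (INR s0 + 1) * (INR s0 + 1)).
    { apply lt_INR in S2. rewrite mult_INR, !S_INR, plus_INR in S2. simpl in S2. lra. }
    apply le_INR in HJ0'. rewrite mult_INR, !plus_INR in HJ0'. simpl in HJ0'.
    pose proof (pos_INR s0). nra. }
  set (h := (x / 2)%nat).
  pose proof (Nat.div_mod x 2 ltac:(lia)) as D3. pose proof (Nat.mod_upper_bound x 2 ltac:(lia)) as D4.
  fold h in D3.
  pose proof (W_nonneg N x).
  destruct (le_lt_dec h J0) as [Hh|Hh].
  - pose proof (W_low_J N x h ltac:(lia) ltac:(nia)) as Hw.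
    assert (Hh2 : (x + 1 <= 2 * (h + 1))%nat) by lia. apply le_INR in Hh2.
    rewrite mult_INR, !plus_INR in Hh2. simpl in Hh2.
    (* W >= (h+1) q/2, q*2v >= 1 *)
    assert (HW : INR x + 1 <= 8 * v * W N x).
    { assert ((INR h + 1) <= (INR h + 1) * (q N * (2 * v))) by (pose proof (pos_INR h); nra). nra. }
    nra.
  - pose proof (W_low_J N x J0 ltac:(lia) HJ0) as Hw.
    assert (HW : 1 <= 12 * W N x).
    { assert ((INR J0 + 1) <= (INR J0 + 1) * (q N * (2 * v))) by (pose proof (pos_INR J0); nra). nra. }
    nra.
Qed.

Lemma alg s mu nu X Y t f P py px :
  1 <= s -> 0 < mu -> 0 < nu -> nu <= s + mu -> 1 <= X -> 1 <= Y -> 0 <= t ->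
  X + Y - 1 <= 2 * X + t * s -> (Y <= X \/ Y = X + t * s) ->
  0 <= f -> f <= P -> f * (s * s) <= 2 * X * (X + Y - 1) * P ->
  0 <= py -> py <= 1 -> py * mu <= 3 * Y -> 0 < px -> X <= 12 * (X + nu) * px ->
  f * py / px <= 204 * P * (1 + t) ^ 2.
Proof.
  intros Hs Hmu Hnu Hnus HX HY Ht HXY Hc Hf0 Hf1 Hf2 Hp0 Hp1 Hp2 Hx0 Hx1.
  assert (HP : 0 <= P) by lra.
  assert (B2 : f * s <= (4 + 2 * t) * P * X).
  { destruct (Rle_dec s X).
    - assert (f * s <= f * X) by (apply Rmult_le_compat_l; lra).
      assert (f * X <= P * X) by (apply Rmult_le_compat_r; lra). nra.
    - assert (f * (s * s) <= 2 * X * (2 * s + t * s) * P).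
      { assert (2 * X * (X + Y - 1) * P <= 2 * X * (2 * s + t * s) * P).
        { apply Rmult_le_compat_r; [lra|]. apply Rmult_le_compat_l; lra. }
        lra. }
      assert (s * (f * s) <= s * ((4 + 2 * t) * P * X)) by nra.
      apply Rmult_le_reg_l in H0; lra. }
  assert (B3 : f * py * mu <= (3 + 12 * t + 6 * t ^ 2) * P * X).
  { assert (f * py * mu <= 3 * f * Y).
    { replace (f * py * mu) with (f * (py * mu)) by ring. replace (3 * f * Y) with (f * (3 * Y)) by ring.
      apply Rmult_le_compat_l; lra. }
    assert (0 <= P * X * (12 * t + 6 * t ^ 2)) by (apply Rmult_le_pos; nra).
    destruct Hc as [Hc|Hc].
    - assert (f * Y <= P * X) by (apply Rmult_le_compat; lra). lra.
    - rewrite Hc in H. assert (f * X <= P * X) by (apply Rmult_le_compat_r; lra).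
      assert (t * (f * s) <= t * ((4 + 2 * t) * P * X)) by (apply Rmult_le_compat_l; lra).
      nra. }
  assert (B1 : f * py <= P) by nra.
  assert (B4 : f * py * (X + nu) <= 17 * P * (1 + t) ^ 2 * X).
  { assert (f * py * nu <= f * py * s + f * py * mu) by (assert (0 <= f * py) by nra; nra).
    assert (f * py * s <= f * s) by (assert (0 <= f * s) by nra; nra).
    assert (f * py * X <= P * X) by (apply Rmult_le_compat_r; lra).
    assert (0 <= P * X * t) by (apply Rmult_le_pos; nra).
    assert (0 <= P * X * t ^ 2) by (apply Rmult_le_pos; nra).
    nra. }
  apply (Rmult_le_reg_r px); [lra|]. unfold Rdiv. rewrite Rmult_assoc, Rinv_l, Rmult_1_r by lra.
  assert (E1 : f * py * X <= f * py * (12 * (X + nu) * px)) by (apply Rmult_le_compat_l; nra).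
  assert (E2 : f * py * (12 * (X + nu) * px) <= 12 * (17 * P * (1 + t) ^ 2 * X) * px).
  { replace (f * py * (12 * (X + nu) * px)) with (12 * (f * py * (X + nu)) * px) by ring.
    apply Rmult_le_compat_r; lra. }
  assert (X * (f * py) <= X * (204 * P * (1 + t) ^ 2 * px)) by nra.
  apply Rmult_le_reg_l in H; lra.
Qed.

Definition ndist (x y : nat) : nat := if Nat.leb x y then (y - x)%nat else (x - y)%nat.

Lemma phalf_eq n x y : p_half n x y = p n (Z.of_nat (ndist x y)) - p n (Z.of_nat (ndist x y) + 2 * Z.of_nat (Nat.min x y + 1))%Z.
Proof.
  unfold p_half, ndist. destruct (Nat.leb_spec x y).
  - rewrite <- (p_sym n (Z.of_nat x - Z.of_nat y)). f_equal; f_equal; lia.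
  - f_equal; f_equal; lia.
Qed.

Lemma dist_INR x y : INR (ndist x y) = Rabs (INR x - INR y).
Proof.
  unfold ndist. destruct (Nat.leb_spec x y).
  - rewrite minus_INR by lia. apply le_INR in H. rewrite Rabs_left1 by lra. lra.
  - rewrite minus_INR by lia. apply lt_INR in H. rewrite Rabs_right by lra. lra.
Qed.

Lemma f_facts n x y :
  0 <= p_half n x y /\ p_half n x y <= p n (Z.of_nat (ndist x y)) /\
  INR n * p_half n x y <= 2 * (INR x + 1) * ((INR x + 1) + (INR y + 1) - 1) * p n (Z.of_nat (ndist x y)).
Proof.
  rewrite phalf_eq.
  pose proof (p_mono_k n (Z.of_nat (ndist x y)) (Nat.min x y + 1) ltac:(lia)).
  pose proof (p_nonneg n (Z.of_nat (ndist x y) + 2 * Z.of_nat (Nat.min x y + 1))).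
  pose proof (p_nonneg n (Z.of_nat (ndist x y))).
  pose proof (p_diff n (ndist x y) (Nat.min x y + 1)) as Hd.
  assert (E : INR (ndist x y) + 2 * INR (Nat.min x y + 1) - 1 = INR x + INR y + 1).
  { unfold ndist. destruct (Nat.leb_spec x y).
    - rewrite Nat.min_l by lia. rewrite minus_INR, plus_INR by lia. simpl. lra.
    - rewrite Nat.min_r by lia. rewrite minus_INR, plus_INR by lia. simpl. lra. }
  rewrite E in Hd.
  assert (K : INR (Nat.min x y + 1) <= INR x + 1).
  { rewrite plus_INR. simpl. apply Rplus_le_compat_r, le_INR. lia. }
  pose proof (pos_INR x). pose proof (pos_INR y). pose proof (pos_INR (Nat.min x y + 1)).
  repeat split; try lra.
  assert (2 * INR (Nat.min x y + 1) * (INR x + INR y + 1) * p n (Z.of_nat (ndist x y)) <=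
          2 * (INR x + 1) * (INR x + INR y + 1) * p n (Z.of_nat (ndist x y))).
  { apply Rmult_le_compat_r; [lra|]. apply Rmult_le_compat_r; [lra|]. lra. }
  replace (INR x + 1 + (INR y + 1) - 1) with (INR x + INR y + 1) by ring. lra.
Qed.

Lemma exp_le a b : a <= b -> exp a <= exp b.
Proof. intros [H|H]. apply Rlt_le, exp_increasing; auto. subst; lra. Qed.

Lemma sqrt_bound_q m : q m * sqrt (INR m + 2) <= 3 / 2.
Proof.
  pose proof (q_bounds m) as [H _]. pose proof (q_nonneg m). pose proof (pos_INR m).
  set (u := sqrt (INR m + 2)). assert (u * u = INR m + 2) by (apply sqrt_sqrt; lra).
  assert (0 <= u) by apply sqrt_pos. assert (0 <= q m * u) by nra. nra.
Qed.

Lemma q_sqrt n : q n * sqrt (INR n + 1) <= sqrt 2.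
Proof.
  pose proof (q_bounds n) as [H _]. pose proof (q_nonneg n). pose proof (pos_INR n).
  rewrite <- (sqrt_square (q n)) by auto. rewrite <- sqrt_mult by nra.
  apply sqrt_le_1_alt. nra.
Qed.

Theorem lemma3p8 (b : R) (hb : 0 < b) :
  exists C : R, 0 < C /\
    forall (x y N n : nat), (1 <= n)%nat -> (n <= N)%nat ->
      frak_p N n x y <=
        C / sqrt (INR n + 1) * exp (- b * Rabs (INR x - INR y) / sqrt (INR n)).
Proof.
  set (K := 204 * (sqrt 2 * exp 1) * exp (2 * (b + 2) ^ 2)).
  assert (HK : 0 < K).
  { unfold K. pose proof (exp_pos 1). pose proof (exp_pos (2 * (b + 2) ^ 2)).
    pose proof (sqrt_lt_R0 2 ltac:(lra)). apply Rmult_lt_0_compat; [|lra].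
    apply Rmult_lt_0_compat; [lra|]. apply Rmult_lt_0_compat; lra. }
  exists K. split; [exact HK|].
  intros x y N n Hn HnN.
  set (m := (N - n)%nat).
  assert (HnR : 1 <= INR n) by (apply (le_INR 1); lia).
  pose proof (pos_INR m) as Hm. pose proof (pos_INR N) as HN. pose proof (pos_INR x). pose proof (pos_INR y).
  assert (HNm : INR N = INR n + INR m) by (unfold m; rewrite <- plus_INR; f_equal; lia).
  set (s := sqrt (INR n)). set (mu := sqrt (INR m + 2)). set (nu := sqrt (INR N + 1)).
  assert (Hs2 : s * s = INR n) by (apply sqrt_sqrt; lra).
  assert (Hmu2 : mu * mu = INR m + 2) by (apply sqrt_sqrt; lra).
  assert (Hnu2 : nu * nu = INR N + 1) by (apply sqrt_sqrt; lra).
  assert (Hs0 : 0 <= s) by apply sqrt_pos. assert (Hmu0 : 0 <= mu) by apply sqrt_pos.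
  assert (Hnu0 : 0 <= nu) by apply sqrt_pos.
  assert (Hs1 : 1 <= s) by nra.
  assert (Hmup : 0 < mu) by nra. assert (Hnup : 0 < nu) by nra.
  assert (Hnus : nu <= s + mu) by nra.
  set (d := INR (ndist x y)). set (t := d / s).
  assert (Hd0 : 0 <= d) by apply pos_INR.
  assert (Hts : t * s = d) by (unfold t; field; lra).
  assert (Ht0 : 0 <= t) by (unfold t; apply Rmult_le_pos; [lra| apply Rlt_le, Rinv_0_lt_compat; lra]).
  set (P := p n (Z.of_nat (ndist x y))).
  set (f := p_half n x y). set (py := psi y (N - n)). set (px := psi x N).
  destruct (f_facts n x y) as [Hf0 [Hf1 Hf2]]. fold P f in Hf0, Hf1, Hf2.
  assert (Hpy0 : 0 <= py) by (unfold py; rewrite psi_eq; apply W_nonneg).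
  assert (Hpy1 : py <= 1) by (unfold py; rewrite psi_eq; apply W_le1).
  assert (Hpy2 : py * mu <= 3 * (INR y + 1)).
  { unfold py. rewrite psi_eq. fold m. pose proof (W_le_q m y). pose proof (sqrt_bound_q m). fold mu in H2.
    pose proof (q_nonneg m). pose proof (W_nonneg m y).
    assert (W m y * mu <= (2 * INR y + 2) * q m * mu) by (apply Rmult_le_compat_r; lra). nra. }
  pose proof (psi_low x N) as Hpx. fold px nu in Hpx.
  assert (Hpx0 : 0 < px).
  { destruct (Rle_lt_dec px 0); auto. assert (12 * (INR x + 1 + nu) * px <= 0).
    { assert (0 <= 12 * (INR x + 1 + nu)) by lra. nra. } lra. }
  assert (Hdxy : INR y + 1 <= INR x + 1 \/ INR y + 1 = INR x + 1 + t * s).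
  { rewrite Hts. unfold d, ndist. destruct (Nat.leb_spec x y).
    - right. rewrite minus_INR by lia. lra.
    - left. apply lt_INR in H1. lra. }
  assert (HXY : INR x + 1 + (INR y + 1) - 1 <= 2 * (INR x + 1) + t * s).
  { rewrite Hts. unfold d. rewrite dist_INR. destruct (Rle_dec (INR x) (INR y)).
    - rewrite Rabs_left1 by lra. lra.
    - rewrite Rabs_right by lra. lra. }
  pose proof (alg s mu nu (INR x + 1) (INR y + 1) t f P py px Hs1 Hmup Hnup Hnus ltac:(lra) ltac:(lra) Ht0
      HXY Hdxy Hf0 Hf1 ltac:(rewrite Hs2; lra) Hpy0 Hpy1 Hpy2 Hpx0 Hpx) as Halg.
  unfold frak_p. fold f py px.
  pose proof (p_gauss_aux n (ndist x y)) as HG. fold P d in HG.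
  set (D := 4 * (INR n + 1)).
  assert (HP : P <= q n * exp 1 * exp (- (t ^ 2 / 8))).
  { assert (HD : 4 <= D) by (unfold D; lra).
    assert (E1 : exp (1 / D) <= exp 1).
    { apply exp_le. assert (D * (1 / D) = 1) by (field; lra). assert (0 < 1 / D) by (apply Rdiv_lt_0_compat; lra). nra. }
    assert (E2 : exp (- (d ^ 2 / D)) <= exp (- (t ^ 2 / 8))).
    { apply exp_le. apply Ropp_le_contravar. unfold t, D.
      replace ((d / s) ^ 2) with (d ^ 2 / INR n) by (rewrite <- Hs2; field; lra).
      apply (Rmult_le_reg_l (8 * INR n * (4 * (INR n + 1)))). nra. field_simplify; [|lra|lra].
      assert (0 <= d ^ 2) by nra. nra. }
    assert (E3 : P = P * exp (d ^ 2 / D) * exp (- (d ^ 2 / D))).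
    { rewrite Rmult_assoc, <- exp_plus. replace (d ^ 2 / D + - (d ^ 2 / D)) with 0 by ring. rewrite exp_0. ring. }
    rewrite E3. pose proof (q_nonneg n). pose proof (exp_pos (- (d ^ 2 / D))).
    pose proof (exp_pos (1 / D)). pose proof (p_nonneg n (Z.of_nat (ndist x y))). fold P in H4.
    apply Rle_trans with (q n * exp (1 / D) * exp (- (d ^ 2 / D))).
    - apply Rmult_le_compat_r; [lra|]. exact HG.
    - apply Rmult_le_compat; try nra; apply Rmult_le_compat_l; lra. }
  assert (HT : (1 + t) ^ 2 * exp (- (t ^ 2 / 8)) <= exp (2 * (b + 2) ^ 2) * exp (- b * t)).
  { pose proof (exp_ineq1_le t). assert ((1 + t) ^ 2 <= exp t ^ 2) by (apply pow_incr; lra).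
    replace (exp t ^ 2) with (exp (2 * t)) in H2 by (replace (2 * t) with (t + t) by ring; rewrite exp_plus; ring).
    apply Rle_trans with (exp (2 * t) * exp (- (t ^ 2 / 8))).
    - apply Rmult_le_compat_r; [apply Rlt_le, exp_pos|lra].
    - rewrite <- !exp_plus. apply exp_le. pose proof (pow2_ge_0 (t - 4 * (b + 2))). nra. }
  pose proof (q_sqrt n) as Hq. pose proof (q_nonneg n).
  set (r := sqrt (INR n + 1)). fold r in Hq.
  assert (Hr : 0 < r) by (apply sqrt_lt_R0; lra).
  replace (- b * Rabs (INR x - INR y) / s) with (- b * t) by (unfold t, d; rewrite dist_INR; field; lra).
  fold r.
  assert (0 <= (1 + t) ^ 2) by nra.
  pose proof (exp_pos 1). pose proof (exp_pos (- (t ^ 2 / 8))). pose proof (exp_pos (2 * (b + 2) ^ 2)). pose proof (exp_pos (- b * t)).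
  assert (S1 : 204 * P * (1 + t) ^ 2 <= 204 * (q n * exp 1) * ((1 + t) ^ 2 * exp (- (t ^ 2 / 8)))).
  { assert (P * (1 + t) ^ 2 <= q n * exp 1 * exp (- (t ^ 2 / 8)) * (1 + t) ^ 2) by (apply Rmult_le_compat_r; lra). nra. }
  assert (S2 : 204 * (q n * exp 1) * ((1 + t) ^ 2 * exp (- (t ^ 2 / 8))) <= 204 * (q n * exp 1) * (exp (2 * (b + 2) ^ 2) * exp (- b * t))).
  { apply Rmult_le_compat_l; [nra|lra]. }
  assert (S3 : 204 * (q n * exp 1) * (exp (2 * (b + 2) ^ 2) * exp (- b * t)) <= K / r * exp (- b * t)).
  { apply (Rmult_le_reg_l r); [lra|].
    replace (r * (K / r * exp (- b * t))) with (K * exp (- b * t)) by (field; lra). unfold K.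
    assert (HA : 0 <= 204 * exp 1 * exp (2 * (b + 2) ^ 2) * exp (- b * t)).
    { repeat apply Rmult_le_pos; lra. }
    assert (q n * r * (204 * exp 1 * exp (2 * (b + 2) ^ 2) * exp (- b * t)) <= sqrt 2 * (204 * exp 1 * exp (2 * (b + 2) ^ 2) * exp (- b * t)))
      by (apply Rmult_le_compat_r; lra).
    replace (r * (204 * (q n * exp 1) * (exp (2 * (b + 2) ^ 2) * exp (- b * t)))) with (q n * r * (204 * exp 1 * exp (2 * (b + 2) ^ 2) * exp (- b * t))) by ring.
    replace (204 * (sqrt 2 * exp 1) * exp (2 * (b + 2) ^ 2) * exp (- b * t)) with (sqrt 2 * (204 * exp 1 * exp (2 * (b + 2) ^ 2) * exp (- b * t))) by ring.
    lra. }
  lra.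
Qed.
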